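(* For $n=2$ threads, in the limit $m\to\infty$, the probability $\Pr[A]$ that the canonical race does not manifest satisfies: under Sequential Consistency, $\Pr[A]=1/6$; under Weak Ordering, $\Pr[A]=7/54\approx 0.1296$; under Total Store Order, $0.1315<\Pr[A]<0.1369$ (more precisely $58/441<\Pr[A]<58/441+1/189$).
   Context: Fix $m\ge 1$. A random program is a sequence $x_1,\dots,x_{m+2}$ of memory operations, each with a type in $\{\mathrm{LD},\mathrm{ST}\}$: $x_1,\dots,x_m$ have i.i.d. types, each $\mathrm{ST}$ with probability $1/2$ and $\mathrm{LD}$ with probability $1/2$; $x_{m+1}$ (the critical load) has type $\mathrm{LD}$ and $x_{m+2}$ (the critical store) has type $\mathrm{ST}$. The initial order is $S_0=(x_1,\dots,x_{m+2})$. A memory model is specified by the set of ordered type pairs $(\tau_1,\tau_2)$ for which an instruction of type $\tau_2$ may be moved ahead of an immediately preceding instruction of type $\tau_1$: Sequential Consistency (SC) allows no pair; Total Store Order (TSO) allows only the pair $(\mathrm{ST},\mathrm{LD})$ (a load may move ahead of a preceding store); Weak Ordering (WO) allows all four pairs. The settling process runs rounds $r=1,\dots,m+2$. Before round $r$, the current order $S_{r-1}$ consists of $x_1,\dots,x_{r-1}$ in some order in positions $1,\dots,r-1$, followed by $x_r,\dots,x_{m+2}$ in positions $r,\dots,m+2$. In round $r$, instruction $x_r$ (starting at position $r$) repeatedly attempts to swap with the instruction immediately preceding it in the current order: the attempt fails automatically if the pair (type of the preceding instruction, type of $x_r$) is not allowed by the memory model, or if $x_r$ is the critical store and the preceding instruction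 is the critical load; otherwise the attempt succeeds independently with probability $1/2$. The round ends when an attempt fails or $x_r$ reaches position $1$; the resulting order is $S_r$. The final order is $S_{m+2}$. Combined model with $n$ threads: generate one random program, then apply the settling process independently to $n$ copies of it (threads $T_1,\dots,T_n$), all under the same memory model. For thread $k$, let $\gamma_k$ be the number of instructions strictly between the critical load and the critical store in its final order, and $\Gamma_k=\gamma_k+2$. Let $s_1,\dots,s_n$ be i.i.d. shifts, independent of everything else, with $\Pr[s_k=j]=2^{-(j+1)}$ for $j\ge0$. $A$ is the event that the closed intervals $[s_k,s_k+\Gamma_k]$, $k=1,\dots,n$, are pairwise disjoint (the race does not manifest). *)

(* Defs.v *)
From Stdlib Require Import Reals List Arith Bool.
Import ListNotations.
Open Scope R_scope.

(* Instruction types: true = ST, false = LD. *)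
(* A memory model: [model p x] = may an instruction of type x move ahead of an
   immediately preceding instruction of type p. *)
Definition memory_model := bool -> bool -> bool.
Definition SC  : memory_model := fun _ _ => false.
Definition TSO : memory_model := fun p x => p && negb x.
Definition WO  : memory_model := fun _ _ => true.

Definition dist (A : Type) := list (A * R).

Definition sumR (l : list R) : R := fold_right Rplus 0 l.

(* Instructions are indexed 0 .. m+1 (x_{i+1} has index i); index m is the
   critical load, index m+1 the critical store. [prog] lists the types of
   x_1..x_m. *)
Definition typ (prog : list bool) (m i : nat) : bool :=
  if Nat.ltb i m then nth i prog false
  else if Nat.eqb i m then false else true.

Definition can_swap (model : memory_model) (prog : list bool) (m y x : nat) : bool :=
  model (typ prog m y) (typ prog m x) && negb (Nat.eqb x (S m) && Nat.eqb y m).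

(* One round: instruction x sits right after the (already placed) prefix,
   given reversed as [pre_rev]; [after] are the instructions x has already
   passed. *)
Fixpoint sink (model : memory_model) (prog : list bool) (m x : nat)
    (pre_rev after : list nat) : dist (list nat) :=
  match pre_rev with
  | [] => [(x :: after, 1)]
  | y :: ys =>
      if can_swap model prog m y x then
        (rev pre_rev ++ x :: after, /2)
          :: map (fun '(o, q) => (o, /2 * q)) (sink model prog m x ys (y :: after))
      else [(rev pre_rev ++ x :: after, 1)]
  end.

Definition round (model : memory_model) (prog : list bool) (m : nat)
    (d : dist (list nat)) (x : nat) : dist (list nat) :=
  flat_map (fun '(o, p) =>
              map (fun '(o', q) => (o', p * q)) (sink model prog m x (rev o) []))
           d.

Definition settle (model : memory_model) (prog : list bool) (m : nat) : dist (list nat) :=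
  fold_left (round model prog m) (seq 0 (m + 2)) [([], 1)].

Fixpoint pos (x : nat) (l : list nat) : nat :=
  match l with
  | [] => 0
  | y :: ys => if Nat.eqb y x then 0 else S (pos x ys)
  end.

(* gamma = number of instructions strictly between critical load and store *)
Definition gamma (m : nat) (o : list nat) : nat := pos (S m) o - pos m o - 1.
Definition Gamma (m : nat) (o : list nat) : nat := (gamma m o + 2)%nat.

(* all programs (type sequences of x_1..x_m), each with probability 2^-m *)
Fixpoint all_progs (m : nat) : list (list bool) :=
  match m with
  | O => [[]]
  | S k => flat_map (fun p => [true :: p; false :: p]) (all_progs k)
  end.

Definition shift_prob (j : nat) : R := (/2) ^ (S j).

Definition disjointb (s1 G1 s2 G2 : nat) : bool :=
  Nat.ltb (s1 + G1) s2 || Nat.ltb (s2 + G2) s1.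

Definition indic (b : bool) : R := if b then 1 else 0.

(* Pr[A and s_1 < N and s_2 < N] for n = 2 threads. *)
Definition PrA_trunc (model : memory_model) (m N : nat) : R :=
  sumR (map (fun prog =>
    (/2) ^ m *
    sumR (map (fun '(o1, p1) =>
      sumR (map (fun '(o2, p2) =>
        p1 * p2 *
        sumR (map (fun s1 =>
          sumR (map (fun s2 =>
            shift_prob s1 * shift_prob s2 *
            indic (disjointb s1 (Gamma m o1) s2 (Gamma m o2)))
          (seq 0 N)))
        (seq 0 N)))
      (settle model prog m)))
    (settle model prog m)))
  (all_progs m)).

(* [PrA model m p]: Pr[A] = p, i.e. the truncations converge to p
   (countable additivity over the shift values). *)
Definition PrA (model : memory_model) (m : nat) (p : R) : Prop :=
  Un_cv (fun N => PrA_trunc model m N) p.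

(* Main.v *)
Require Import Defs.
From Stdlib Require Import Reals.
From Stdlib Require Import Lra Lia List Arith Bool.
Import ListNotations.
Open Scope R_scope.

Lemma sumR_app l1 l2 : sumR (l1 ++ l2) = sumR l1 + sumR l2.
Proof. induction l1; simpl; [lra|rewrite IHl1; lra]. Qed.

Lemma sumR_map_ext_in {A} (f g : A -> R) l :
  (forall x, In x l -> f x = g x) -> sumR (map f l) = sumR (map g l).
Proof. intro H; f_equal; apply map_ext_in; auto. Qed.

Lemma sumR_map_plus {A} (f g : A -> R) l :
  sumR (map (fun x => f x + g x) l) = sumR (map f l) + sumR (map g l).
Proof. induction l; simpl; [lra|rewrite IHl; lra]. Qed.

Lemma sumR_map_scale {A} (c : R) (f : A -> R) l :
  sumR (map (fun x => c * f x) l) = c * sumR (map f l).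
Proof. induction l; simpl; [lra|rewrite IHl; lra]. Qed.

Lemma sumR_map_const {A} (c : R) (l : list A) :
  sumR (map (fun _ => c) l) = INR (length l) * c.
Proof. induction l; simpl length; [simpl; lra|]. rewrite S_INR. simpl. rewrite IHl. lra. Qed.

Lemma sumR_seq_S (f : nat -> R) n :
  sumR (map f (seq 0 (S n))) = sumR (map f (seq 0 n)) + f n.
Proof. rewrite seq_S, map_app, sumR_app. simpl. lra. Qed.

Lemma sumR_seq_shift (f : nat -> R) n :
  sumR (map f (seq 0 (S n))) = f 0%nat + sumR (map (fun j => f (S j)) (seq 0 n)).
Proof. simpl. rewrite <- seq_shift, map_map. reflexivity. Qed.

Definition E (d : Defs.dist (list nat)) (f : list nat -> R) : R :=
  sumR (map (fun '(o, p) => p * f o) d).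

Lemma E_ext d f g : (forall o, f o = g o) -> E d f = E d g.
Proof. intro H; unfold E; f_equal; apply map_ext; intros [o p]; rewrite H; auto. Qed.

Lemma E_app d1 d2 f : E (d1 ++ d2) f = E d1 f + E d2 f.
Proof. unfold E; rewrite map_app, sumR_app; auto. Qed.

Lemma E_scale_map d c f :
  E (map (fun '(o, q) => (o, c * q)) d) f = c * E d f.
Proof. induction d as [|[o q] d IH]; unfold E in *; simpl; [lra|]. rewrite IH; lra. Qed.

Lemma E_plus d f g : E d (fun o => f o + g o) = E d f + E d g.
Proof. induction d as [|[o q] d IH]; unfold E in *; simpl; [lra|]. rewrite IH; lra. Qed.

Lemma E_mult d c f : E d (fun o => c * f o) = c * E d f.
Proof. induction d as [|[o q] d IH]; unfold E in *; simpl; [lra|]. rewrite IH; lra. Qed.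

Lemma E_round model prog m d x f :
  E (round model prog m d x) f = E d (fun o => E (sink model prog m x (rev o) []) f).
Proof.
  induction d as [|[o p] d IH]; [reflexivity|].
  unfold round in *. simpl flat_map. rewrite E_app, IH.
  unfold E at 1. fold (E (map (fun '(o', q) => (o', p * q)) (sink model prog m x (rev o) [])) f).
  rewrite E_scale_map. unfold E; simpl. reflexivity.
Qed.

Fixpoint Ev model prog m (l : list nat) (g : list nat -> R) (o : list nat) : R :=
  match l with
  | [] => g o
  | x :: l' => E (sink model prog m x (rev o) []) (Ev model prog m l' g)
  end.

Lemma E_fold model prog m l d g :
  E (fold_left (round model prog m) l d) g = E d (Ev model prog m l g).
Proof.
  revert d; induction l as [|x l IH]; intro d; simpl; [reflexivity|].
  rewrite IH, E_round. reflexivity.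
Qed.

Lemma E_settle model prog m g :
  E (settle model prog m) g = Ev model prog m (seq 0 (m+2)) g [].
Proof. unfold settle. rewrite E_fold. unfold E; simpl. lra. Qed.

Fixpoint lead (P : nat -> bool) (l : list nat) : nat :=
  match l with [] => 0%nat | y :: ys => if P y then S (lead P ys) else 0%nat end.

Definition Lsum (T : nat) (F : nat -> R) : R :=
  sumR (map (fun j => (/2)^(S j) * F j) (seq 0 T)) + (/2)^T * F T.

Definition out (pre aft : list nat) (x j : nat) : list nat :=
  rev (skipn j pre) ++ x :: rev (firstn j pre) ++ aft.

Lemma sink_E model prog m x pre aft F :
  E (sink model prog m x pre aft) F =
  Lsum (lead (fun y => can_swap model prog m y x) pre) (fun j => F (out pre aft x j)).
Proof.
  revert aft; induction pre as [|y ys IH]; intro aft.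
  - unfold Lsum, E, out; simpl. lra.
  - simpl sink. simpl lead. destruct (can_swap model prog m y x) eqn:Hc.
    + unfold E at 1; simpl map. simpl sumR.
      fold (E (map (fun '(o, q) => (o, / 2 * q)) (sink model prog m x ys (y :: aft))) F).
      rewrite E_scale_map, IH. unfold Lsum. rewrite sumR_seq_shift.
      unfold out. simpl.
      assert (Heq : forall j, rev (skipn j ys) ++ x :: rev (firstn j ys) ++ y :: aft
                     = rev (skipn j ys) ++ x :: (rev (firstn j ys) ++ [y]) ++ aft).
      { intro j. rewrite <- app_assoc. reflexivity. }
      set (T := lead _ ys). rewrite !Heq.
      rewrite (sumR_map_ext_in (fun j => / 2 * (/ 2 * (/ 2) ^ j) * F (rev (skipn j ys) ++ x :: (rev (firstn j ys) ++ [y]) ++ aft))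
          (fun j => /2 * ((/2 * (/2)^j) * F (rev (skipn j ys) ++ x :: rev (firstn j ys) ++ y :: aft)))).
      2:{ intros; rewrite Heq; ring. }
      rewrite sumR_map_scale.
      lra.
    + unfold E, Lsum, out; simpl. lra.
Qed.

Lemma geo_sum T : sumR (map (fun j => (/2)^(S j)) (seq 0 T)) = 1 - (/2)^T.
Proof. induction T; [simpl; lra|]. rewrite sumR_seq_S, IHT. simpl. lra. Qed.

Lemma Lsum_const T c : Lsum T (fun _ => c) = c.
Proof.
  unfold Lsum. rewrite (sumR_map_ext_in _ (fun j => c * (/2)^(S j))) by (intros; ring).
  rewrite sumR_map_scale, geo_sum. ring.
Qed.

Lemma Lsum_ext_le T F G : (forall j, (j <= T)%nat -> F j = G j) -> Lsum T F = Lsum T G.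
Proof.
  intro H. unfold Lsum. rewrite H by lia. f_equal.
  apply sumR_map_ext_in. intros j Hj. apply in_seq in Hj. rewrite H by lia. auto.
Qed.

Lemma Lsum_diff t h : Lsum t h - Lsum (S t) h = (/2)^(S t) * (h t - h (S t)).
Proof. unfold Lsum. rewrite sumR_seq_S. simpl. lra. Qed.

Lemma Lsum_plus T F G : Lsum T (fun j => F j + G j) = Lsum T F + Lsum T G.
Proof.
  unfold Lsum. rewrite (sumR_map_ext_in _ (fun j => (/2)^(S j) * F j + (/2)^(S j) * G j)) by (intros; ring).
  rewrite sumR_map_plus. ring.
Qed.

Lemma Lsum_scale T c F : Lsum T (fun j => c * F j) = c * Lsum T F.
Proof.
  unfold Lsum. rewrite (sumR_map_ext_in _ (fun j => c * ((/2)^(S j) * F j))) by (intros; ring).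
  rewrite sumR_map_scale. ring.
Qed.

Lemma Lsum_sum {A} T (H : A -> nat -> R) (l : list A) :
  sumR (map (fun p => Lsum T (H p)) l) = Lsum T (fun j => sumR (map (fun p => H p j) l)).
Proof.
  induction l as [|a l IH]; simpl.
  - rewrite Lsum_const. reflexivity.
  - rewrite IH. rewrite <- Lsum_plus. reflexivity.
Qed.

Lemma lead_all P l : (forall y, P y = true) -> lead P l = length l.
Proof. intro H; induction l; simpl; [auto|rewrite H, IHl; auto]. Qed.

Lemma lead_ext P Q l : (forall y, P y = Q y) -> lead P l = lead Q l.
Proof. intro H; induction l; simpl; [auto|rewrite H, IHl; auto]. Qed.

Lemma lead_le P l : (lead P l <= length l)%nat.
Proof. induction l; simpl; [lia|destruct (P a); simpl; lia]. Qed.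

Lemma lead_firstn P l j : (j <= lead P l)%nat -> forall y, In y (firstn j l) -> P y = true.
Proof.
  revert j; induction l as [|a l IH]; intros j Hj y Hy.
  - destruct j; simpl in Hy; contradiction.
  - destruct j; simpl in Hy; [contradiction|].
    simpl in Hj. destruct (P a) eqn:Pa; [|lia].
    destruct Hy as [<-|Hy]; [auto|]. apply (IH j); [lia|auto].
Qed.

Lemma lead_app P l1 x l2 : (forall y, In y l1 -> P y = true) -> P x = false ->
  lead P (l1 ++ x :: l2) = length l1.
Proof.
  intros H Hx; induction l1 as [|a l1 IH]; simpl.
  - rewrite Hx; auto.
  - rewrite H by (left; auto). rewrite IH; auto. intros; apply H; right; auto.
Qed.

Lemma rev_out pre x j : rev (out pre [] x j) = firstn j pre ++ x :: skipn j pre.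
Proof.
  unfold out. rewrite app_nil_r, rev_app_distr. simpl.
  rewrite !rev_involutive, <- app_assoc. reflexivity.
Qed.

Lemma in_out pre x j y : In y (out pre [] x j) -> y = x \/ In y pre.
Proof.
  intro H. rewrite in_rev, rev_out in H. apply in_app_iff in H.
  rewrite <- (firstn_skipn j pre).
  destruct H as [H|[H|H]]; [right; apply in_app_iff; auto|left; auto|right; apply in_app_iff; auto].
Qed.

Lemma length_out pre x j : length (out pre [] x j) = S (length pre).
Proof.
  rewrite <- length_rev, rev_out, length_app. simpl.
  rewrite <- (firstn_skipn j pre) at 3. rewrite length_app. lia.
Qed.

Lemma pos_app x l1 l2 : ~ In x l1 -> Defs.pos x (l1 ++ x :: l2) = length l1.
Proof.
  induction l1 as [|a l1 IH]; intro H; simpl.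
  - rewrite Nat.eqb_refl; auto.
  - destruct (Nat.eqb a x) eqn:E1; [apply Nat.eqb_eq in E1; subst; exfalso; apply H; left; auto|].
    rewrite IH; auto. intro; apply H; right; auto.
Qed.

Lemma Gamma_lemma m A C D :
  ~ In m A -> ~ In (S m) A -> ~ In (S m) C ->
  Gamma m (A ++ m :: C ++ S m :: D) = (length C + 2)%nat.
Proof.
  intros H1 H2 H3. unfold Gamma, gamma.
  rewrite pos_app by auto.
  replace (A ++ m :: C ++ S m :: D) with ((A ++ m :: C) ++ S m :: D)
    by (rewrite <- app_assoc; reflexivity).
  rewrite pos_app.
  - rewrite length_app; simpl. lia.
  - rewrite in_app_iff. intros [H|[H|H]]; auto. lia.
Qed.

Definition g (m : nat) (o : list nat) : R := (/2)^(Gamma m o).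

Lemma Lsum0 F : Lsum 0 F = F 0%nat.
Proof. unfold Lsum; simpl; ring. Qed.

Lemma lead_false P l : (forall y, P y = false) -> lead P l = 0%nat.
Proof. intro H; destruct l; simpl; [auto|rewrite H; auto]. Qed.

Lemma out0 pre x : out pre [] x 0 = rev pre ++ [x].
Proof. unfold out; simpl. reflexivity. Qed.

Lemma In_skipn' (y n : nat) l : In y (skipn n l) -> In y l.
Proof. intro H; rewrite <- (firstn_skipn n l); apply in_app_iff; auto. Qed.
Lemma In_firstn' (y n : nat) l : In y (firstn n l) -> In y l.
Proof. intro H; rewrite <- (firstn_skipn n l); apply in_app_iff; auto. Qed.

Lemma typ_lt prog m r : (r < m)%nat -> typ prog m r = nth r prog false.
Proof. intro H; unfold typ. rewrite (proj2 (Nat.ltb_lt r m) H). auto. Qed.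
Lemma typ_m prog m : typ prog m m = false.
Proof. unfold typ. rewrite Nat.ltb_irrefl, Nat.eqb_refl. auto. Qed.
Lemma typ_Sm prog m : typ prog m (S m) = true.
Proof. unfold typ. rewrite (proj2 (Nat.ltb_ge (S m) m)) by lia.
  rewrite (proj2 (Nat.eqb_neq (S m) m)) by lia. auto. Qed.

Lemma not_in_lt (o : list nat) a r : (forall y, In y o -> (y < r)%nat) -> (r <= a)%nat -> ~ In a o.
Proof. intros H Hr Hin. specialize (H _ Hin). lia. Qed.

Lemma SC_claim prog m k : forall r o, (r + k = m)%nat -> (forall y, In y o -> (y < r)%nat) ->
  Ev SC prog m (seq r (k+2)) (g m) o = /4.
Proof.
  induction k as [|k IH]; intros r o Hr Ho.
  - replace (seq r (0+2)) with [r; S r] by reflexivity. assert (r = m) as -> by lia.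
    simpl Ev. rewrite sink_E, lead_false by reflexivity. rewrite Lsum0.
    rewrite sink_E, lead_false by reflexivity. rewrite Lsum0.
    rewrite !out0, !rev_involutive. unfold g.
    replace ((o ++ [m]) ++ [S m]) with (o ++ m :: [] ++ S m :: []) by (rewrite <- app_assoc; reflexivity).
    rewrite Gamma_lemma.
    + simpl. lra.
    + apply (not_in_lt _ _ m); auto.
    + apply (not_in_lt _ _ m); auto.
    + simpl; lia.
  - replace (seq r (S k + 2)) with (r :: seq (S r) (k+2)) by reflexivity.
    simpl Ev. rewrite sink_E, lead_false by reflexivity. rewrite Lsum0.
    rewrite out0, rev_involutive. apply IH; [lia|].
    intros y Hy. apply in_app_iff in Hy. destruct Hy as [Hy|[Hy|[]]]; [specialize (Ho _ Hy); lia|lia].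
Qed.

Definition cWO (m : nat) : R := Lsum m (fun j => Lsum j (fun i => (/2)^(j - i + 2))).

Lemma WO_claim prog m k : forall r o, (r + k = m)%nat -> length o = r -> (forall y, In y o -> (y < r)%nat) ->
  Ev WO prog m (seq r (k+2)) (g m) o = cWO m.
Proof.
  induction k as [|k IH]; intros r o Hr Hl Ho.
  - replace (seq r (0+2)) with [r; S r] by reflexivity. assert (r = m) as -> by lia.
    simpl Ev. rewrite sink_E.
    rewrite lead_all, length_rev, Hl.
    2:{ intro y. unfold can_swap, WO. rewrite (proj2 (Nat.eqb_neq m (S m))) by lia. auto. }
    unfold cWO. apply Lsum_ext_le. intros j Hj.
    rewrite sink_E, rev_out.
    set (ro := rev o).
    assert (Hro : forall y, In y ro -> (y < m)%nat) by (intros y Hy; apply Ho; apply in_rev; auto).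
    assert (Hlro : length ro = m) by (unfold ro; rewrite length_rev; auto).
    assert (HFj : length (firstn j ro) = j) by (rewrite length_firstn; lia).
    rewrite lead_app.
    2:{ intros y Hy. apply In_firstn' in Hy. apply Hro in Hy. unfold can_swap, WO.
        rewrite Nat.eqb_refl, (proj2 (Nat.eqb_neq y m)) by lia. auto. }
    2:{ unfold can_swap, WO. rewrite !Nat.eqb_refl. auto. }
    rewrite HFj. apply Lsum_ext_le. intros i Hi.
    unfold out. rewrite skipn_app, firstn_app. rewrite HFj.
    replace (i - j)%nat with 0%nat by lia. simpl skipn. simpl firstn. rewrite !app_nil_r.
    rewrite rev_app_distr. simpl rev at 1.
    rewrite <- !app_assoc. simpl app.
    unfold g. rewrite Gamma_lemma.
    + rewrite length_rev, length_skipn, HFj. f_equal; try lia.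
    + rewrite <- in_rev. intro H. apply In_skipn' in H. apply Hro in H. lia.
    + rewrite <- in_rev. intro H. apply In_skipn' in H. apply Hro in H. lia.
    + rewrite <- in_rev. intro H. apply In_skipn', In_firstn' in H. apply Hro in H. lia.
  - replace (seq r (S k + 2)) with (r :: seq (S r) (k+2)) by reflexivity.
    simpl Ev. rewrite sink_E.
    rewrite lead_all.
    2:{ intro y. unfold can_swap, WO. rewrite (proj2 (Nat.eqb_neq r (S m))) by lia. auto. }
    rewrite <- (Lsum_const (length (rev o)) (cWO m)). apply Lsum_ext_le. intros j Hj.
    apply IH; [lia| |].
    + rewrite length_out, length_rev; auto.
    + intros y Hy. apply in_out in Hy. destruct Hy as [->|Hy]; [lia|].
      apply in_rev in Hy. specialize (Ho _ Hy); lia.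
Qed.

Definition psi (j : nat) : R := (/2)^(j+2).

Fixpoint Kf (prog : list bool) (r k t : nat) : R :=
  match k with
  | O => Lsum t psi
  | S k' => if nth r prog false then Kf prog (S r) k' (S t) else Lsum t (Kf prog (S r) k')
  end.

Definition tr prog m (o : list nat) : nat := lead (fun y => typ prog m y) (rev o).

Lemma TSO_claim prog m k : forall r o, (r + k = m)%nat -> (forall y, In y o -> (y < r)%nat) ->
  Ev TSO prog m (seq r (k+2)) (g m) o = Kf prog r k (tr prog m o).
Proof.
  induction k as [|k IH]; intros r o Hr Ho.
  - replace (seq r (0+2)) with [r; S r] by reflexivity. assert (r = m) as -> by lia.
    simpl Ev. rewrite sink_E.
    rewrite (lead_ext _ (fun y => typ prog m y)).
    2:{ intro y. unfold can_swap, TSO. rewrite typ_m, (proj2 (Nat.eqb_neq m (S m))) by lia.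
        destruct (typ prog m y); simpl; auto. }
    fold (tr prog m o). simpl Kf. apply Lsum_ext_le. intros j Hj.
    rewrite sink_E, lead_false.
    2:{ intro y. unfold can_swap, TSO. rewrite typ_Sm. destruct (typ prog m y); simpl; auto. }
    rewrite Lsum0, out0, rev_involutive.
    set (ro := rev o).
    assert (Hro : forall y, In y ro -> (y < m)%nat) by (intros y Hy; apply Ho; apply in_rev; auto).
    assert (Hle : (j <= length ro)%nat) by (pose proof (lead_le (fun y => typ prog m y) ro); unfold tr in Hj; fold ro in Hj; lia).
    unfold out. rewrite app_nil_r.
    replace ((rev (skipn j ro) ++ m :: rev (firstn j ro)) ++ [S m])
      with (rev (skipn j ro) ++ m :: rev (firstn j ro) ++ S m :: []) by (rewrite <- app_assoc; reflexivity).
    unfold g, psi. rewrite Gamma_lemma.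
    + rewrite length_rev, length_firstn. f_equal; try lia.
    + rewrite <- in_rev. intro H. apply In_skipn' in H. apply Hro in H. lia.
    + rewrite <- in_rev. intro H. apply In_skipn' in H. apply Hro in H. lia.
    + rewrite <- in_rev. intro H. apply In_firstn' in H. apply Hro in H. lia.
  - replace (seq r (S k + 2)) with (r :: seq (S r) (k+2)) by reflexivity.
    assert (Hrm : (r < m)%nat) by lia.
    assert (Hval : forall j, forall y, In y (out (rev o) [] r j) -> (y < S r)%nat).
    { intros j y Hy. apply in_out in Hy. destruct Hy as [->|Hy]; [lia|].
      apply in_rev in Hy. specialize (Ho _ Hy); lia. }
    simpl Ev. simpl Kf. rewrite sink_E.
    destruct (nth r prog false) eqn:Hb.
    + rewrite lead_false.
      2:{ intro y. unfold can_swap, TSO. rewrite (typ_lt prog m r Hrm), Hb. destruct (typ prog m y); simpl; auto. }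
      rewrite Lsum0. rewrite IH; [|lia|apply Hval]. f_equal.
      unfold tr. rewrite rev_out. simpl. rewrite (typ_lt prog m r Hrm), Hb. reflexivity.
    + rewrite (lead_ext _ (fun y => typ prog m y)).
      2:{ intro y. unfold can_swap, TSO. rewrite (typ_lt prog m r Hrm), Hb, (proj2 (Nat.eqb_neq r (S m))) by lia.
          destruct (typ prog m y); simpl; auto. }
      fold (tr prog m o). apply Lsum_ext_le. intros j Hj.
      rewrite IH; [|lia|apply Hval]. f_equal.
      unfold tr at 1. rewrite rev_out.
      assert (Hle : (j <= length (rev o))%nat) by (pose proof (lead_le (fun y => typ prog m y) (rev o)); unfold tr in Hj; lia).
      rewrite lead_app.
      * rewrite length_firstn. lia.
      * apply lead_firstn. auto.
      * rewrite (typ_lt prog m r Hrm); auto.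
Qed.

Lemma Un_cv_ext' (u v : nat -> R) l : (forall n, u n = v n) -> Un_cv u l -> Un_cv v l.
Proof. intros H Hu eps He. destruct (Hu eps He) as [N HN]. exists N. intros n Hn. rewrite <- H. auto. Qed.

Lemma cv_const c : Un_cv (fun _ => c) c.
Proof. intros eps He. exists 0%nat. intros. unfold Rdist. rewrite Rminus_diag, Rabs_R0. auto. Qed.

Lemma cv_scale (u : nat -> R) l c : Un_cv u l -> Un_cv (fun N => c * u N) (c * l).
Proof. intro H. apply CV_mult; [apply cv_const|auto]. Qed.

Lemma cv_sumR_map {A} (f : nat -> A -> R) (h : A -> R) l :
  (forall x, Un_cv (fun N => f N x) (h x)) -> Un_cv (fun N => sumR (map (f N) l)) (sumR (map h l)).
Proof.
  intro H. induction l as [|a l IH]; simpl.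
  - apply cv_const.
  - apply CV_plus; auto.
Qed.

Lemma cv_E d (f : nat -> list nat -> R) h :
  (forall o, Un_cv (fun N => f N o) (h o)) -> Un_cv (fun N => E d (f N)) (E d h).
Proof.
  intro H. induction d as [|[o p] d IH]; unfold E in *; simpl.
  - apply cv_const.
  - apply CV_plus; auto. apply cv_scale; auto.
Qed.

Lemma cv_pow_half : Un_cv (fun n => (/2)^n) 0.
Proof.
  intros eps He. destruct (pow_lt_1_zero (/2) ltac:(rewrite Rabs_pos_eq; lra) eps He) as [N HN].
  exists N. intros n Hn. unfold Rdist. rewrite Rminus_0_r. auto.
Qed.

Lemma pow_half_le1 k : (/2)^k <= 1.
Proof. induction k; simpl; [lra|]. assert (0 <= (/2)^k) by (apply pow_le; lra). lra. Qed.
Lemma pow_half_pos k : 0 < (/2)^k.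
Proof. apply pow_lt; lra. Qed.

Definition DS (N a b : nat) : R :=
  sumR (map (fun s1 => sumR (map (fun s2 => shift_prob s1 * shift_prob s2 *
     indic (disjointb s1 a s2 b)) (seq 0 N))) (seq 0 N)).

Definition grid (f : nat -> nat -> R) N := sumR (map (fun s1 => sumR (map (fun s2 => f s1 s2) (seq 0 N))) (seq 0 N)).

Lemma grid_S f N : grid f (S N) = grid f N + sumR (map (fun s1 => f s1 N) (seq 0 N))
   + sumR (map (fun s2 => f N s2) (seq 0 (S N))).
Proof.
  unfold grid. rewrite sumR_seq_S.
  rewrite (sumR_map_ext_in (fun s1 => sumR (map (fun s2 => f s1 s2) (seq 0 (S N))))
     (fun s1 => sumR (map (fun s2 => f s1 s2) (seq 0 N)) + f s1 N)).
  2:{ intros. rewrite sumR_seq_S. reflexivity. }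
  rewrite sumR_map_plus. lra.
Qed.

Lemma sum_swap (f : nat -> nat -> R) l1 l2 :
  sumR (map (fun i => sumR (map (fun j => f i j) l2)) l1) =
  sumR (map (fun j => sumR (map (fun i => f i j) l1)) l2).
Proof.
  induction l1 as [|a l1 IH]; simpl.
  - rewrite sumR_map_const. lra.
  - rewrite IH. rewrite <- sumR_map_plus. reflexivity.
Qed.

Definition Af a N := grid (fun s1 s2 => shift_prob s1 * shift_prob s2 * indic (Nat.ltb (s1 + a) s2)) N.

Definition Rrow a N := sumR (map (fun s1 => (/2)^(S s1) * indic (Nat.ltb (s1 + a) N)) (seq 0 N)).

Lemma Rrow_lt a N : (N < a)%nat -> Rrow a N = 0.
Proof.
  intro H. unfold Rrow. rewrite (sumR_map_ext_in _ (fun _ => 0)).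
  - rewrite sumR_map_const; lra.
  - intros x Hx. apply in_seq in Hx. rewrite (proj2 (Nat.ltb_ge _ _)) by lia. simpl. ring.
Qed.

Lemma Rrow_ge a N : (a <= N)%nat -> Rrow a N = 1 - (/2)^(N - a).
Proof.
  intro H. unfold Rrow.
  replace (seq 0 N) with (seq 0 (N-a) ++ seq (0 + (N-a)) a) by (rewrite <- seq_app; f_equal; lia).
  rewrite map_app, sumR_app.
  rewrite (sumR_map_ext_in _ (fun j => (/2)^(S j))).
  2:{ intros x Hx. apply in_seq in Hx. rewrite (proj2 (Nat.ltb_lt _ _)) by lia. simpl. ring. }
  rewrite (sumR_map_ext_in (fun s1 => (/2)^(S s1) * indic (Nat.ltb (s1 + a) N)) (fun _ => 0)).
  2:{ intros x Hx. apply in_seq in Hx. rewrite (proj2 (Nat.ltb_ge _ _)) by lia. simpl. ring. }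
  rewrite geo_sum, sumR_map_const. lra.
Qed.

Lemma Af_S a N : Af a (S N) = Af a N + (/2)^(S N) * Rrow a N.
Proof.
  unfold Af. rewrite grid_S.
  rewrite (sumR_map_ext_in (fun s2 => shift_prob N * shift_prob s2 * indic (Nat.ltb (N + a) s2)) (fun _ => 0)).
  2:{ intros x Hx. apply in_seq in Hx. rewrite (proj2 (Nat.ltb_ge _ _)) by lia. simpl. ring. }
  rewrite sumR_map_const. unfold Rrow. rewrite <- sumR_map_scale.
  rewrite (sumR_map_ext_in (fun s1 => shift_prob s1 * shift_prob N * indic (Nat.ltb (s1 + a) N))
     (fun s1 => (/2)^(S N) * ((/2)^(S s1) * indic (Nat.ltb (s1 + a) N)))).
  2:{ intros. unfold shift_prob. ring. }
  lra.
Qed.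

Definition Aform a N := (/2)^a / 3 - (/2)^N + 2/3 * (/2)^N * (/2)^(N - a).

Lemma Af_closed a N : ((N <= a)%nat -> Af a N = 0) /\ ((a <= N)%nat -> Af a N = Aform a N).
Proof.
  induction N as [|N IH].
  - split; intro H.
    + reflexivity.
    + assert (a = 0%nat) by lia. subst. unfold Aform. unfold Af, grid. simpl. lra.
  - destruct IH as [IH1 IH2]. rewrite Af_S. split; intro H.
    + rewrite IH1, Rrow_lt by lia. lra.
    + destruct (Nat.eq_dec a (S N)) as [->|Hne].
      * rewrite IH1, Rrow_lt by lia. unfold Aform. rewrite Nat.sub_diag. simpl. lra.
      * rewrite IH2, Rrow_ge by lia. unfold Aform.
        replace (S N - a)%nat with (S (N - a)) by lia. simpl. lra.
Qed.

Lemma cv_Af a : Un_cv (Af a) ((/2)^a / 3).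
Proof.
  intros eps He. destruct (cv_pow_half (eps/2) ltac:(lra)) as [N0 HN0].
  exists (max N0 a). intros n Hn.
  rewrite (proj2 (Af_closed a n)) by lia. unfold Aform, Rdist.
  specialize (HN0 n ltac:(lia)). unfold Rdist in HN0. rewrite Rminus_0_r in HN0.
  assert (H0 : 0 < (/2)^n) by (apply pow_lt; lra).
  assert (H1 : 0 < (/2)^(n-a)) by (apply pow_lt; lra).
  assert (H2 : (/2)^(n-a) <= 1) by apply pow_half_le1.
  rewrite Rabs_pos_eq in HN0 by lra.
  set (x := (/2)^n) in *. set (y := (/2)^(n-a)) in *.
  assert (Hxy : x * y <= x) by nra. assert (0 <= x * y) by nra.
  replace ((/2)^a / 3 - x + 2/3 * x * y - (/2)^a / 3) with (- x + 2/3 * (x * y)) by ring.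
  rewrite Rabs_left1 by lra. lra.
Qed.

Lemma DS_split N a b : DS N a b = Af a N + Af b N.
Proof.
  unfold DS, Af, grid.
  rewrite (sumR_map_ext_in (fun s1 => sumR (map (fun s2 => shift_prob s1 * shift_prob s2 * indic (disjointb s1 a s2 b)) (seq 0 N)))
    (fun s1 => sumR (map (fun s2 => shift_prob s1 * shift_prob s2 * indic (Nat.ltb (s1 + a) s2)) (seq 0 N))
             + sumR (map (fun s2 => shift_prob s2 * shift_prob s1 * indic (Nat.ltb (s2 + b) s1)) (seq 0 N)))).
  2:{ intros s1 _. rewrite <- sumR_map_plus. apply sumR_map_ext_in. intros s2 _.
      unfold disjointb. destruct (Nat.ltb (s1 + a) s2) eqn:E1; destruct (Nat.ltb (s2 + b) s1) eqn:E2; simpl; try ring.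
      apply Nat.ltb_lt in E1; apply Nat.ltb_lt in E2; lia. }
  rewrite sumR_map_plus. f_equal.
  rewrite (sum_swap (fun s1 s2 => shift_prob s2 * shift_prob s1 * indic (Nat.ltb (s2 + b) s1))). reflexivity.
Qed.

Lemma cv_DS a b : Un_cv (fun N => DS N a b) (((/2)^a + (/2)^b) / 3).
Proof.
  apply (Un_cv_ext' (fun N => Af a N + Af b N)).
  - intro; rewrite DS_split; auto.
  - replace (((/2)^a + (/2)^b) / 3) with ((/2)^a/3 + (/2)^b/3) by field.
    apply CV_plus; apply cv_Af.
Qed.

Lemma double_E (d : Defs.dist (list nat)) (H : list nat -> list nat -> R) :
  sumR (map (fun '(o1, p1) => sumR (map (fun '(o2, p2) => p1 * p2 * H o1 o2) d)) d) =
  E d (fun o1 => E d (fun o2 => H o1 o2)).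
Proof.
  unfold E. apply sumR_map_ext_in. intros [o1 p1] _.
  rewrite <- sumR_map_scale. apply sumR_map_ext_in. intros [o2 p2] _. ring.
Qed.

Lemma PrA_trunc_eq model m N : PrA_trunc model m N =
  sumR (map (fun prog => (/2)^m * E (settle model prog m)
     (fun o1 => E (settle model prog m) (fun o2 => DS N (Gamma m o1) (Gamma m o2)))) (all_progs m)).
Proof.
  unfold PrA_trunc. apply sumR_map_ext_in. intros prog _. f_equal.
  rewrite <- double_E. reflexivity.
Qed.

Lemma Ev_const model prog m l c : forall o, Ev model prog m l (fun _ => c) o = c.
Proof.
  induction l as [|x l IH]; intro o; simpl; [auto|].
  rewrite (E_ext _ _ (fun _ => c)) by auto. rewrite sink_E. apply Lsum_const.
Qed.

Lemma mass_settle model prog m : E (settle model prog m) (fun _ => 1) = 1.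
Proof. rewrite E_settle. apply Ev_const. Qed.

Definition Pm (model : memory_model) (m : nat) : R :=
  sumR (map (fun prog => (/2)^m * (2/3 * E (settle model prog m) (g m))) (all_progs m)).

Lemma PrA_Pm model m : PrA model m (Pm model m).
Proof.
  unfold PrA.
  apply (Un_cv_ext' (fun N => sumR (map (fun prog => (/2)^m * E (settle model prog m)
     (fun o1 => E (settle model prog m) (fun o2 => DS N (Gamma m o1) (Gamma m o2)))) (all_progs m)))).
  { intro; rewrite PrA_trunc_eq; auto. }
  unfold Pm.
  apply (cv_sumR_map (fun N prog => (/2)^m * E (settle model prog m)
     (fun o1 => E (settle model prog m) (fun o2 => DS N (Gamma m o1) (Gamma m o2))))).
  intro prog. apply cv_scale.
  set (d := settle model prog m).
  assert (Hlim : E d (fun o1 => E d (fun o2 => ((/2)^(Gamma m o1) + (/2)^(Gamma m o2)) / 3)) = 2/3 * E d (g m)).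
  { assert (Hm : E d (fun _ => 1) = 1) by apply mass_settle.
    rewrite (E_ext _ _ (fun o1 => g m o1 / 3 * 1 + /3 * E d (g m))).
    2:{ intro o1. rewrite (E_ext _ _ (fun o2 => (g m o1 / 3) * 1 + /3 * g m o2)) by (intro; unfold g; field).
        rewrite E_plus, !E_mult, Hm. ring. }
    rewrite E_plus.
    rewrite (E_ext _ (fun o => g m o / 3 * 1) (fun o => /3 * g m o)) by (intro; field).
    rewrite (E_ext _ (fun _ => /3 * E d (g m)) (fun o => (/3 * E d (g m)) * 1)) by (intro; ring).
    rewrite !E_mult, Hm. field. }
  rewrite <- Hlim.
  apply cv_E. intro o1. apply cv_E. intro o2. apply cv_DS.
Qed.

Lemma length_flat_map2 {A} (f : A -> list A) l : (forall x, length (f x) = 2%nat) ->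
  length (flat_map f l) = (2 * length l)%nat.
Proof. intro H. induction l; simpl; [auto|]. rewrite length_app, H, IHl. lia. Qed.

Lemma length_all_progs m : length (all_progs m) = (2^m)%nat.
Proof. induction m; simpl; [auto|]. rewrite length_flat_map2 by auto. rewrite IHm. lia. Qed.

Lemma sum_progs_const m c : sumR (map (fun _ => (/2)^m * c) (all_progs m)) = c.
Proof.
  rewrite sumR_map_const, length_all_progs, pow_INR.
  replace (INR 2) with 2 by (simpl; lra).
  replace (2^m * ((/2)^m * c)) with ((2 * /2)^m * c) by (rewrite Rpow_mult_distr; ring).
  rewrite Rinv_r, pow1 by lra. ring.
Qed.

Lemma Pm_SC m : Pm SC m = /6.
Proof.
  unfold Pm. rewrite (sumR_map_ext_in _ (fun _ => (/2)^m * (2/3 * /4))).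
  - rewrite sum_progs_const. field.
  - intros prog _. rewrite E_settle. rewrite (SC_claim prog m m 0 []); auto.
    intros y [].
Qed.

Lemma Pm_WO m : Pm WO m = 2/3 * cWO m.
Proof.
  unfold Pm. rewrite (sumR_map_ext_in _ (fun _ => (/2)^m * (2/3 * cWO m))).
  - rewrite sum_progs_const. auto.
  - intros prog _. rewrite E_settle. rewrite (WO_claim prog m m 0 []); auto.
    intros y [].
Qed.

Definition f0 (t : nat) : R := Lsum t psi.
Definition Qop (h : nat -> R) (t : nat) : R := /2 * h (S t) + /2 * Lsum t h.
Definition hh (m : nat) : nat -> R := Nat.iter m Qop f0.

Lemma Kf_shift b p k : forall r t, Kf (b :: p) (S r) k t = Kf p r k t.
Proof.
  induction k as [|k IH]; intros r t; simpl; [auto|].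
  destruct (nth r p false); [apply IH|]. apply Lsum_ext_le. intros; apply IH.
Qed.

Lemma sumR_flat_map {A} (F : A -> R) (G : A -> list A) l :
  sumR (map F (flat_map G l)) = sumR (map (fun p => sumR (map F (G p))) l).
Proof. induction l; simpl; [auto|]. rewrite map_app, sumR_app, IHl. auto. Qed.

Lemma avg m : forall t, (/2)^m * sumR (map (fun p => Kf p 0 m t) (all_progs m)) = hh m t.
Proof.
  induction m as [|m IH]; intro t.
  - simpl. unfold hh, f0. simpl. ring.
  - change (all_progs (S m)) with (flat_map (fun p => [true :: p; false :: p]) (all_progs m)).
    rewrite sumR_flat_map.
    rewrite (sumR_map_ext_in _ (fun p => Kf p 0 m (S t) + Lsum t (Kf p 0 m))).
    2:{ intros p _. simpl. rewrite Kf_shift. rewrite (Lsum_ext_le t (Kf (false :: p) 1 m) (Kf p 0 m)).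
        - ring.
        - intros; apply Kf_shift. }
    rewrite sumR_map_plus, Lsum_sum.
    unfold hh. simpl Nat.iter. fold (hh m). unfold Qop.
    rewrite <- IH.
    rewrite (Lsum_ext_le t (hh m) (fun j => (/2)^m * sumR (map (fun p => Kf p 0 m j) (all_progs m)))).
    2:{ intros; rewrite IH; auto. }
    rewrite Lsum_scale. simpl pow. ring.
Qed.

Lemma Pm_TSO m : Pm TSO m = 2/3 * hh m 0.
Proof.
  unfold Pm. rewrite (sumR_map_ext_in _ (fun p => 2/3 * ((/2)^m * Kf p 0 m 0))).
  - rewrite sumR_map_scale, sumR_map_scale, avg. auto.
  - intros prog _. rewrite E_settle. rewrite (TSO_claim prog m m 0 []); auto.
    + unfold tr. simpl. ring.
    + intros y [].
Qed.

Lemma a3 : hh 3 0 = 13/64.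
Proof. unfold hh, Qop, f0, Lsum, psi. simpl. field. Qed.

Lemma mq_le1 m : INR m * (/2)^m <= 1.
Proof.
  induction m; [simpl; lra|]. rewrite S_INR. simpl pow.
  pose proof (pow_half_le1 m). pose proof (pow_half_pos m). nra.
Qed.

Lemma V_closed j : Lsum j (fun i => (/2)^(j - i + 2)) = INR j * (/2)^(j+3) + (/2)^(j+2).
Proof.
  unfold Lsum. rewrite (sumR_map_ext_in _ (fun _ => (/2)^(j+3))).
  - rewrite sumR_map_const, length_seq. rewrite Nat.sub_diag. simpl plus. rewrite <- pow_add.
    replace (j + 2)%nat with (j+2)%nat by lia. ring.
  - intros i Hi. apply in_seq in Hi. rewrite <- pow_add. f_equal. lia.
Qed.

Lemma cWO_closed m : cWO m = 7/36 + ((/2)^m * (/2)^m) * (INR m / 24 + 1/18).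
Proof.
  unfold cWO. rewrite (Lsum_ext_le m _ (fun j => INR j * (/2)^(j+3) + (/2)^(j+2))) by (intros; apply V_closed).
  unfold Lsum.
  assert (HS : forall n, sumR (map (fun j => (/2)^(S j) * (INR j * (/2)^(j+3) + (/2)^(j+2))) (seq 0 n))
      = 7/36 - (INR n / 12 + 7/36) * ((/2)^n * (/2)^n)).
  { induction n; [simpl; lra|]. rewrite sumR_seq_S, IHn. rewrite S_INR, !pow_add. simpl. field. }
  rewrite HS, !pow_add. simpl. field.
Qed.

Lemma cv_WO : Un_cv (Pm WO) (7/54).
Proof.
  intros eps He. destruct (cv_pow_half eps He) as [N HN]. exists N. intros n Hn.
  specialize (HN n Hn). unfold Rdist in *. rewrite Rminus_0_r in HN.
  rewrite Pm_WO, cWO_closed.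
  pose proof (mq_le1 n). pose proof (pow_half_le1 n). pose proof (pow_half_pos n).
  rewrite Rabs_pos_eq in HN by lra.
  set (q := (/2)^n) in *.
  assert (HI : 0 <= INR n) by apply pos_INR.
  replace (2 / 3 * (7 / 36 + q * q * (INR n / 24 + 1 / 18)) - 7 / 54) with (2/3 * (q * q * (INR n / 24 + 1 / 18))) by field.
  rewrite Rabs_pos_eq by nra. nra.
Qed.

Lemma cv_SC : Un_cv (Pm SC) (1/6).
Proof. apply (Un_cv_ext' (fun _ => 1/6)). { intro; rewrite Pm_SC; field. } apply cv_const. Qed.

Lemma Qop_diff h t : Qop h t - Qop h (S t) = /2 * (h (S t) - h (S (S t))) + /2 * ((/2)^(S t) * (h t - h (S t))).
Proof. unfold Qop. pose proof (Lsum_diff t h). lra. Qed.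

Lemma Dbound m : forall t, 0 <= hh m t - hh m (S t) <= (3/8)^m * ((/2)^t * (/2)^t) / 16.
Proof.
  induction m as [|m IH]; intro t.
  - unfold hh. simpl Nat.iter. unfold f0. rewrite Lsum_diff. unfold psi.
    rewrite !pow_add. simpl. pose proof (pow_half_pos t). split; nra.
  - change (hh (S m) t - hh (S m) (S t)) with (Qop (hh m) t - Qop (hh m) (S t)).
    rewrite Qop_diff. destruct (IH t) as [A1 A2]. destruct (IH (S t)) as [B1 B2].
    simpl pow in *. pose proof (pow_half_pos t). pose proof (pow_half_le1 t).
    set (x := (/2)^t) in *. set (c := (3/8)^m) in *.
    assert (0 < c) by (unfold c; apply pow_lt; lra).
    split; [nra|].
    assert (HX : 0 <= x * x) by nra.
    assert (/2 * (/2 * x) * (hh m t - hh m (S t)) <= /2 * (/2 * x) * (c * (x * x) / 16)) by (apply Rmult_le_compat_l; nra).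
    nra.
Qed.

Definition aa (m : nat) : R := hh m 0.
Definition bb (m : nat) : R := aa m - (3/8)^m / 20.

Lemma aa_step m : aa m - aa (S m) = /2 * (hh m 0 - hh m 1).
Proof. unfold aa. change (hh (S m) 0) with (Qop (hh m) 0). unfold Qop. rewrite Lsum0. lra. Qed.

Lemma aa_dec m : aa (S m) <= aa m.
Proof. pose proof (aa_step m). pose proof (Dbound m 0). lra. Qed.

Lemma bb_inc m : bb m <= bb (S m).
Proof.
  unfold bb. pose proof (aa_step m). pose proof (Dbound m 0). simpl pow in *.
  assert (0 < (3/8)^m) by (apply pow_lt; lra). nra.
Qed.

Lemma bb_le_aa m : bb m <= aa m.
Proof. unfold bb. assert (0 < (3/8)^m) by (apply pow_lt; lra). lra. Qed.

Lemma aa_mono n k : aa (n + k) <= aa n.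
Proof. induction k; [rewrite Nat.add_0_r; lra|]. rewrite Nat.add_succ_r. pose proof (aa_dec (n+k)). lra. Qed.
Lemma bb_mono n k : bb n <= bb (n + k).
Proof. induction k; [rewrite Nat.add_0_r; lra|]. rewrite Nat.add_succ_r. pose proof (bb_inc (n+k)). lra. Qed.

Lemma cv_le (u : nat -> R) l c N : Un_cv u l -> (forall n, (n >= N)%nat -> u n <= c) -> l <= c.
Proof.
  intros Hu Hc. destruct (Rle_dec l c) as [|Hn]; auto. exfalso.
  destruct (Hu (l - c) ltac:(lra)) as [N0 HN0].
  specialize (HN0 (max N N0) ltac:(lia)). specialize (Hc (max N N0) ltac:(lia)).
  unfold Rdist in HN0. apply Rabs_def2 in HN0. lra.
Qed.
Lemma cv_ge (u : nat -> R) l c N : Un_cv u l -> (forall n, (n >= N)%nat -> c <= u n) -> c <= l.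
Proof.
  intros Hu Hc. destruct (Rle_dec c l) as [|Hn]; auto. exfalso.
  destruct (Hu (c - l) ltac:(lra)) as [N0 HN0].
  specialize (HN0 (max N N0) ltac:(lia)). specialize (Hc (max N N0) ltac:(lia)).
  unfold Rdist in HN0. apply Rabs_def2 in HN0. lra.
Qed.

Lemma cv_TSO : exists L, Un_cv (Pm TSO) L /\ 58/441 < L < 58/441 + 1/189.
Proof.
  assert (Hd : Un_decreasing aa) by (intro; apply aa_dec).
  assert (Hlb : has_lb aa).
  { exists (- bb 0). intros x [n ->]. unfold opp_seq.
    pose proof (bb_mono 0 n). pose proof (bb_le_aa n). simpl in *. lra. }
  destruct (decreasing_cv aa Hd Hlb) as [L HL].
  exists (2/3 * L). split.
  - apply (Un_cv_ext' (fun n => 2/3 * aa n)). { intro; rewrite Pm_TSO; auto. }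
    apply cv_scale; auto.
  - assert (H1 : L <= aa 3).
    { apply (cv_le aa L (aa 3) 3); auto. intros n Hn. replace n with (3 + (n-3))%nat by lia. apply aa_mono. }
    assert (H2 : bb 3 <= L).
    { apply (cv_ge aa L (bb 3) 3); auto. intros n Hn. replace n with (3 + (n-3))%nat by lia.
      pose proof (bb_mono 3 (n-3)). pose proof (bb_le_aa (3 + (n-3))). lra. }
    unfold bb, aa in *. rewrite a3 in *. simpl in H2. lra.
Qed.

Theorem theorem4 :
  (exists P : nat -> R, (forall m, (1 <= m)%nat -> PrA SC m (P m)) /\
     Un_cv P (1/6)) /\
  (exists P : nat -> R, (forall m, (1 <= m)%nat -> PrA WO m (P m)) /\
     Un_cv P (7/54)) /\
  (exists P : nat -> R, (forall m, (1 <= m)%nat -> PrA TSO m (P m)) /\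
     exists L : R, Un_cv P L /\ 58/441 < L < 58/441 + 1/189).
Proof.
  split; [exists (Pm SC); split; [intros; apply PrA_Pm | apply cv_SC]|].
  split; [exists (Pm WO); split; [intros; apply PrA_Pm | apply cv_WO]|].
  exists (Pm TSO). split; [intros; apply PrA_Pm | apply cv_TSO].
Qed.

Print Assumptions theorem4.
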